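(* Let $\nu\ge3$ be a square-free integer with $\nu\equiv2$ or $3\pmod 4$. Define $x_0=0$ and $x_{n+1}=\sqrt{\nu+x_n}$. Let $n\ge1$. For any maximal ideal $\mathcal{P}\subseteq\mathbb{Z}[x_n]$ with $\mathcal{P}\cap\mathbb{Z}=2\mathbb{Z}$, the localization of $\mathbb{Z}[x_n]$ at $\mathcal{P}$ is a discrete valuation ring.
   Context: Square roots are the positive real ones. *)

(* Defs.v *)
From HB Require Import structures.
From mathcomp Require Import all_boot all_order all_algebra.
From mathcomp Require Import reals.
Set Implicit Arguments. Unset Strict Implicit. Unset Printing Implicit Defensive.
Import Order.TTheory GRing.Theory Num.Theory.
Local Open Scope ring_scope.

Definition squarefree (nu : nat) : Prop :=
  forall p : nat, prime p -> ~ (p * p %| nu)%N.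

Section Defs.
Variable R : realType.

Fixpoint xseq (nu : nat) (n : nat) : R :=
  match n with
  | 0%N => 0
  | m.+1 => Num.sqrt (nu%:R + xseq nu m)
  end.

Definition Zadj (x : R) : R -> Prop :=
  fun y => exists p : {poly int}, y = (map_poly intr p).[x].

Definition ideal_in (A I : R -> Prop) : Prop :=
  [/\ forall y, I y -> A y, I 0,
      forall a b, I a -> I b -> I (a - b)
    & forall a b, A a -> I b -> I (a * b)].

Definition maximal_ideal (A M : R -> Prop) : Prop :=
  [/\ ideal_in A M, ~ M 1 &
      forall J, ideal_in A J -> (forall y, M y -> J y) -> ~ J 1 ->
        forall y, J y -> M y].

Definition localization (A P : R -> Prop) : R -> Prop :=
  fun y => exists a s, [/\ A a, A s, ~ P s & y = a / s].

Definition principal_ideal_ring (B : R -> Prop) : Prop :=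
  forall I, ideal_in B I ->
    exists g, B g /\ forall y, I y <-> exists b, B b /\ y = b * g.

(* DVR: a principal ideal domain with exactly one nonzero maximal ideal
   (B is a subring of a field, hence a domain). *)
Definition dvr (B : R -> Prop) : Prop :=
  principal_ideal_ring B /\
  exists M, [/\ maximal_ideal B M, (exists y, M y /\ y != 0) &
    forall M', maximal_ideal B M' -> forall y, M' y <-> M y].

End Defs.

(* Main.v *)
Require Import Defs.
From HB Require Import structures.
From mathcomp Require Import all_boot all_order all_algebra.
From mathcomp Require Import reals.
From mathcomp Require Import zify ring lra.
From Stdlib Require Import Classical.
Import Order.TTheory GRing.Theory Num.Theory.
Local Open Scope ring_scope.

Lemma L1 {A : comNzRingType} (a b : A) m : exists t, (a + b *+ 2)^+m = a^+m + t *+ 2.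
Proof.
elim: m => [|m [t IH]]; first by exists 0; rewrite !expr0 mul0rn addr0.
exists (a * t + b * a^+m + b * t *+ 2); rewrite !exprS IH; ring.
Qed.

Lemma L2 {A : comNzRingType} (p : {poly A}) (a b : A) : exists t, p.[a + b *+ 2] = p.[a] + t *+ 2.
Proof.
elim/poly_ind: p => [|p c [t IH]]; first by exists 0; rewrite !horner0 mul0rn addr0.
exists (t * a + p.[a] * b + t * b *+ 2).
rewrite !(hornerD, hornerM, hornerX, hornerC) IH; ring.
Qed.

Lemma size_Mn_le {A : nzSemiRingType} (p : {poly A}) n : (size (p *+ n) <= size p)%N.
Proof. by apply/leq_sizeP => j hj; rewrite coefMn nth_default // mul0rn. Qed.

Lemma eis_step m (q s : {poly int}) : (2 <= m)%N -> (size q <= m)%N -> ~~ (2 %| q`_0)%Z ->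
  (size s <= 2)%N ->
  exists q' : {poly int}, [/\ (size q' <= 2 * m)%N, ~~ (2 %| q'`_0)%Z &
     ('X^m + q *+ 2) \Po ('X^2 + s *+ 2) = 'X^(2 * m)%N + q' *+ 2].
Proof.
move=> m2 sq oq ss.
set h := 'X^2 + s *+ 2; set g := 'X^m + q *+ 2.
have hs : (size (s *+ 2) < size ('X^2 : {poly int}))%N.
  by rewrite size_polyXn; apply: leq_ltn_trans (size_Mn_le _ _) _; apply: leq_ltn_trans ss _.
have hq : (size (q *+ 2) < size ('X^m : {poly int}))%N.
  by rewrite size_polyXn; apply: leq_ltn_trans (size_Mn_le _ _) _.
have sh : size h = 3%N by rewrite /h size_polyDl // size_polyXn.
have lh : lead_coef h = 1 by rewrite /h lead_coefDl ?lead_coefXn.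
have sg : size g = m.+1 by rewrite /g size_polyDl // size_polyXn.
have lg : lead_coef g = 1 by rewrite /g lead_coefDl ?lead_coefXn.
have [t Ht] := L1 ('X^2 : {poly int}) s m.
have eg : g \Po h = 'X^(2 * m)%N + (t + (q \Po h)) *+ 2.
  by rewrite /g comp_polyD comp_Xn_poly raddfMn /= -/h /h Ht -exprM -addrA -mulrnDl.
exists (t + (q \Po h)); split.
- apply/leq_sizeP => j hj.
  have sg' : (size (g \Po h)).-1 = (2 * m)%N by rewrite size_comp_poly sg sh mulnC.
  have lg' : lead_coef (g \Po h) = 1 by rewrite lead_coef_comp ?sh // lg lh expr1n mulr1.
  have E : (t + (q \Po h))`_j *+ 2 = (g \Po h)`_j - ('X^(2 * m)%N)`_j.
    by rewrite eg [in RHS]coefD coefMn; ring.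
  have : (g \Po h)`_j - ('X^(2 * m)%N : {poly int})`_j = 0.
    rewrite coefXn; case: (ltngtP j (2 * m)%N) => [|hgt|heq]; first by rewrite ltnNge hj.
      rewrite nth_default ?subrr //; apply: leq_trans hgt; rewrite -sg'; exact: leqSpred.
    by rewrite heq -sg' -lead_coefE lg' subrr.
  rewrite -E => /eqP; rewrite mulrn_eq0 /= => /eqP; done.
- have e0 : (g \Po h)`_0 = (t + (q \Po h))`_0 *+ 2.
    have z : (0 == (2 * m))%N = false by apply/eqP; lia.
    by rewrite eg coefD coefXn coefMn z add0r.
  move: e0; set T0 := (t + (q \Po h))`_0; clearbody T0 => e0.
  move: e0; rewrite -horner_coef0 horner_comp /h /g !(hornerD, hornerXn, hornerMn) horner_coef0 expr0n /= add0r.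
  have [t' Ht'] := L2 q 0 s`_0; rewrite add0r in Ht'; rewrite Ht' horner_coef0.
  case: m m2 {sq sg hq lg Ht eg g} => [|[|m']] // _.
  rewrite !exprS.
  set A := (s`_0 *+ 2 * (s`_0 *+ 2 * (s`_0 *+ 2) ^+ m')).
  have -> : A = 4 * (s`_0 * (s`_0 * (s`_0 *+ 2) ^+ m')) by rewrite /A; ring.
  set B := (s`_0 * (s`_0 * (s`_0 *+ 2) ^+ m')) => e.
  clearbody A B; have e' : T0 = 2 * B + q`_0 + 2 * t' by move: e; rewrite !mulr2n; clear Ht'; move: T0 B t' (q`_0) => a b c d /=; lia.
  rewrite e'; apply/negP => hd; move/negP: oq; apply; lia.
- exact: eg.
Qed.

Section Ev.
Variable R : realType.
Definition ev (p : {poly int}) (y : R) := (map_poly intr p).[y].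

Lemma evD p q y : ev (p + q) y = ev p y + ev q y.
Proof. by rewrite /ev rmorphD hornerD. Qed.
Lemma evM p q y : ev (p * q) y = ev p y * ev q y.
Proof. by rewrite /ev rmorphM hornerM. Qed.
Lemma evB p q y : ev (p - q) y = ev p y - ev q y.
Proof. by rewrite /ev rmorphB hornerD hornerN. Qed.
Lemma evC c y : ev c%:P y = c%:~R.
Proof. by rewrite /ev map_polyC hornerC. Qed.
Lemma evX y : ev 'X y = y.
Proof. by rewrite /ev map_polyX hornerX. Qed.
Lemma evXn n y : ev 'X^n y = y ^+ n.
Proof. by rewrite /ev map_polyXn hornerXn. Qed.
Lemma evMn p n y : ev (p *+ n) y = ev p y *+ n.
Proof. by rewrite /ev rmorphMn hornerMn. Qed.
Lemma ev_comp p q y : ev (p \Po q) y = ev p (ev q y).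
Proof. by rewrite /ev map_comp_poly horner_comp. Qed.

End Ev.
Arguments ev {R}.

Section X.
Variable R : realType.
Variable nu : nat.
Hypothesis Hnu : (nu %% 4 = 2 \/ nu %% 4 = 3)%N.

Definition aa : int := (nu %/ 4)%N%:Z.
Definition cc (n : nat) : int := if (nu %% 4 == 2)%N then 0 else (odd n)%:Z.
Definition kk (n : nat) : int :=
  if (nu %% 4 == 3)%N && ~~ odd n then - (2 * aa + 2) else - (2 * aa + 1).
Definition hpoly n : {poly int} := 'X^2 + ((cc n)%:P * 'X + (kk n)%:P) *+ 2.
Definition xx n := xseq R nu n.
Definition pi n : R := xx n - (cc n)%:~R.

Lemma key n : (1 <= n)%N -> 2 * kk n = cc n ^+ 2 - nu%:Z - cc n.-1.
Proof.
move=> n1.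
have Enu : nu%:Z = 4 * aa + (nu %% 4)%N%:Z by rewrite /aa {1}(divn_eq nu 4); lia.
rewrite /kk /cc Enu.
case: n n1 => // n _ /=.
case: Hnu => ->; case: (odd n) => /=; lia.
Qed.

Lemma xx_ge0 n : 0 <= xx n.
Proof. by case: n => [|n] //=; rewrite sqrtr_ge0. Qed.

Lemma xx_sq n : (1 <= n)%N -> xx n ^+ 2 = nu%:R + xx n.-1.
Proof.
case: n => // n _ /=; rewrite sqr_sqrtr //.
by apply: addr_ge0 => //; apply: xx_ge0.
Qed.

Lemma ev_h n : (1 <= n)%N -> ev (hpoly n) (pi n) = pi n.-1.
Proof.
move=> n1.
have H : ((2 * kk n)%:~R : R) = ((cc n ^+ 2 - nu%:Z - cc n.-1)%:~R) by rewrite key.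
rewrite !(rmorphB, rmorphM, rmorphXn) /= in H.
rewrite /hpoly evD evXn evMn evD evM evC evX evC /pi.
have X2 := @xx_sq n n1.
rewrite pmulrn in H.
move: H X2; set c := ((cc n)%:~R : R); set c' := ((cc n.-1)%:~R : R); set k := ((kk n)%:~R : R).
move=> H X2.
have -> : xx n.-1 = xx n ^+ 2 - nu%:R by rewrite X2 addrC addKr.
rewrite mulr2n.
have e2 : ((2%:Z)%:~R : R) = 2 by [].
rewrite e2 in H.
nra.
Qed.


Lemma eis_n n : (1 <= n)%N -> exists q : {poly int},
  [/\ (size q <= 2 ^ n)%N, ~~ (2 %| q`_0)%Z & ev ('X^(2 ^ n) + q *+ 2) (pi n) = 0].
Proof.
elim: n => // n IH _.
case: n IH => [_|n IH].
  exists ((cc 1)%:P * 'X + (kk 1)%:P); split.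
  - apply/leq_sizeP => j hj; rewrite coefD coefMX !coefC.
    by case: j hj => [|[|j]] // _; rewrite addr0.
  - rewrite coefD coefMX !coefC /= add0r /kk /= andbF; move: aa => a; apply/negP => h; lia.
  - have -> : ('X^(2 ^ 1) + ((cc 1)%:P * 'X + (kk 1)%:P) *+ 2) = hpoly 1 by [].
    rewrite ev_h //= /pi /cc /=; case: ifP => _; by rewrite subr0.
have [q [sq oq eq]] := IH isT.
have m2 : (2 <= 2 ^ n.+1)%N by rewrite expnS; have := expn_gt0 2 n; lia.
have ss : (size ((cc n.+2)%:P * 'X + (kk n.+2)%:P)%R <= 2)%N.
  apply/leq_sizeP => j hj; rewrite coefD coefMX !coefC.
  by case: j hj => [|[|j]] // _; rewrite addr0.
have [q' [sq' oq' eq']] := @eis_step _ _ _ m2 sq oq ss.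
exists q'; split => //; rewrite expnS -eq' ev_comp.
have -> : ('X^2 + ((cc n.+2)%:P * 'X + (kk n.+2)%:P) *+ 2) = hpoly n.+2 by [].
by rewrite ev_h.
Qed.

End X.

Set Implicit Arguments.

Lemma L3 (s : {poly int}) : exists t : {poly int}, (forall i, t`_i = s`_i.+1) /\ s = t * 'X + (s`_0)%:P.
Proof.
elim/poly_ind: s => [|p c _]; first by exists 0; split => [i|]; rewrite ?coef0 ?mul0r ?add0r.
exists p; split => [i|]; first by rewrite coefD coefMX coefC /= addr0.
by rewrite coefD coefMX coefC /= add0r.
Qed.

Section Abs.
Variable R : realType.
Variables (D P : R -> Prop) (pe : R) (m : nat) (q : {poly int}).
Hypothesis HD : forall y, D y <-> exists s, y = ev s pe.
Hypothesis HP : maximal_ideal D P.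
Hypothesis HZ : forall z : int, P z%:~R <-> (2 %| z)%Z.
Hypothesis Hm : (1 <= m)%N.
Hypothesis Hq : (size q <= m)%N.
Hypothesis Hodd : ~~ (2 %| q`_0)%Z.
Hypothesis Heq : ev ('X^m + q *+ 2) pe = 0.

Lemma D_ev s : D (ev s pe). Proof. by apply/HD; exists s. Qed.
Lemma DM a b : D a -> D b -> D (a * b).
Proof. by move=> /HD[s ->] /HD[t ->]; rewrite -evM; apply: D_ev. Qed.
Lemma DA a b : D a -> D b -> D (a + b).
Proof. by move=> /HD[s ->] /HD[t ->]; rewrite -evD; apply: D_ev. Qed.
Lemma DB a b : D a -> D b -> D (a - b).
Proof. by move=> /HD[s ->] /HD[t ->]; rewrite -evB; apply: D_ev. Qed.
Lemma Dz (z : int) : D z%:~R.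
Proof. by rewrite -(evC _ z pe); apply: D_ev. Qed.
Lemma D1 : D 1. Proof. by have := Dz 1. Qed.
Lemma D0 : D 0. Proof. by have := Dz 0. Qed.
Lemma Dpe : D pe. Proof. by rewrite -(evX _ pe); apply: D_ev. Qed.
Lemma DX a k : D a -> D (a ^+ k).
Proof. move=> Da; elim: k => [|k IH]; first by rewrite expr0; apply: D1. by rewrite exprS; apply: DM. Qed.

Lemma PD y : P y -> D y. Proof. by case: HP => -[H _ _ _] _ _; apply: H. Qed.
Lemma P0 : P 0. Proof. by case: HP => -[_ H _ _] _ _. Qed.
Lemma PB a b : P a -> P b -> P (a - b). Proof. by case: HP => -[_ _ H _] _ _; apply: H. Qed.
Lemma PM a b : D a -> P b -> P (a * b). Proof. by case: HP => -[_ _ _ H] _ _; apply: H. Qed.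
Lemma P1 : ~ P 1. Proof. by case: HP. Qed.
Lemma PN b : P b -> P (- b). Proof. by move=> Pb; rewrite -sub0r; apply: PB => //; apply: P0. Qed.
Lemma PA a b : P a -> P b -> P (a + b). Proof. by move=> Pa Pb; rewrite -(opprK b); apply: PB => //; apply: PN. Qed.
Lemma PMr a b : P a -> D b -> P (a * b). Proof. by move=> Pa Db; rewrite mulrC; apply: PM. Qed.

Lemma Pprime a b : D a -> D b -> P (a * b) -> P a \/ P b.
Proof.
move=> Da Db Pab; case: (classic (P a)) => Pa; [by left|right].
pose J y := exists p d, [/\ P p, D d & y = p + a * d].
have IJ : ideal_in D J.
  split.
  - by move=> y [p [d [Pp Dd ->]]]; apply: DA; [apply: PD|apply: DM].
  - by exists 0, 0; split; rewrite ?mulr0 ?addr0 //; [apply: P0|apply: D0].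
  - move=> y z [p [d [Pp Dd ->]]] [p' [d' [Pp' Dd' ->]]].
    exists (p - p'), (d - d'); split; [exact: PB|exact: DB|ring].
  - move=> c y Dc [p [d [Pp Dd ->]]].
    exists (c * p), (c * d); split; [exact: PM|exact: DM|ring].
case: (classic (J 1)) => [[p [d [Pp Dd e]]]|nJ1].
  have -> : b = b * p + (a * b) * d by rewrite -[b in LHS]mulr1 e; ring.
  by apply: PA; [apply: PM|apply: PMr].
exfalso; apply: Pa; case: HP => _ _ Hmax; apply: (Hmax J IJ) => //.
  by move=> y Py; exists y, 0; split; rewrite ?mulr0 ?addr0 //; apply: D0.
by exists 0, 1; split; rewrite ?mulr1 ?add0r //; [apply: P0|apply: D1].
Qed.

Lemma Pnz s : ~ P s -> s != 0.
Proof. by move=> nP; apply/eqP => e; apply: nP; rewrite e; apply: P0. Qed.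

Definition B := localization D P.

Lemma BD a : D a -> B a.
Proof. by move=> Da; exists a, 1; split; rewrite ?divr1 //; [apply: D1|apply: P1]. Qed.

Lemma BM x y : B x -> B y -> B (x * y).
Proof.
move=> [a [s [Da Ds Ps ->]]] [a' [s' [Da' Ds' Ps' ->]]].
exists (a * a'), (s * s'); split; [exact: DM|exact: DM| |by rewrite mulf_div].
by case/Pprime => //.
Qed.

Lemma BA x y : B x -> B y -> B (x + y).
Proof.
move=> [a [s [Da Ds Ps ->]]] [a' [s' [Da' Ds' Ps' ->]]].
exists (a * s' + a' * s), (s * s'); split.
- by apply: DA; apply: DM.
- exact: DM.
- by case/Pprime => //.
- by rewrite addf_div //; apply: Pnz.
Qed.

Lemma BN x : B x -> B (- x).
Proof.
move=> [a [s [Da Ds Ps ->]]]; exists (- a), s; split => //; last by rewrite mulNr.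
by rewrite -sub0r; apply: DB => //; apply: D0.
Qed.

Lemma BB x y : B x -> B y -> B (x - y).
Proof. by move=> Bx By; apply: BA => //; apply: BN. Qed.

Lemma Binv a : D a -> ~ P a -> B a^-1.
Proof. by move=> Da Pa; exists 1, a; split; rewrite ?mul1r //; apply: D1. Qed.

Lemma B0 : B 0. Proof. apply: BD; apply: D0. Qed.
Lemma B1 : B 1. Proof. apply: BD; apply: D1. Qed.
Lemma BX x k : B x -> B (x ^+ k).
Proof. move=> Bx; elim: k => [|k IH]; first by rewrite expr0; apply: B1. by rewrite exprS; apply: BM. Qed.

Definition isU u := [/\ B u, B u^-1 & u != 0].

Lemma isU_mul u v : isU u -> isU v -> isU (u * v).
Proof.
move=> [Bu Bu' u0] [Bv Bv' v0]; split; [exact: BM| |by rewrite mulf_neq0].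
by rewrite invfM; apply: BM.
Qed.

Lemma isU_inv u : isU u -> isU u^-1.
Proof. by move=> [Bu Bu' u0]; split; rewrite ?invrK ?invr_eq0. Qed.

Lemma isU_D a : D a -> ~ P a -> isU a.
Proof. by move=> Da Pa; split; [apply: BD|apply: Binv|apply: Pnz]. Qed.

Definition w := - ev q pe.

Lemma pe_m : pe ^+ m = 2 * w.
Proof.
move: Heq; rewrite evD evXn evMn /w => e.
apply/eqP; rewrite -subr_eq0; apply/eqP; rewrite -e; rewrite mulr2n; ring.
Qed.

Lemma Dw : D w.
Proof. by rewrite /w -sub0r; apply: DB; [apply: D0|apply: D_ev]. Qed.

Lemma P2 : P 2.
Proof. by have := (proj2 (HZ 2)); apply. Qed.

Lemma Ppow y k : D y -> P (y ^+ k.+1) -> P y.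
Proof.
move=> Dy; elim: k => [|k IH]; first by rewrite expr1.
rewrite exprS => /Pprime [] //; by apply: DX.
Qed.

Lemma em : exists m', m = m'.+1.
Proof. by case: m Hm => // m' _; exists m'. Qed.

Lemma Ppe : P pe.
Proof.
have [m' e] := em.
apply: (@Ppow _ m'); first exact: Dpe.
by rewrite -e pe_m mulrC; apply: PM; [apply: Dw|apply: P2].
Qed.

Lemma evdec s : exists t, ev s pe = (s`_0)%:~R + pe * ev t pe.
Proof.
have [t [_ e]] := L3 s; exists t.
by rewrite {1}e evD evM evX evC mulrC addrC.
Qed.

Lemma Pw : ~ P w.
Proof.
move=> Pw; have [t e] := evdec q.
have : P (q`_0)%:~R.
  have -> : (q`_0)%:~R = - w - pe * ev t pe :> R by rewrite /w opprK e; ring.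
  by apply: PB; [apply: PN|apply: PMr; [apply: Ppe|apply: D_ev]].
by move/HZ; apply/negP.
Qed.

Lemma w0 : w != 0. Proof. exact: (@Pnz w Pw). Qed.
Lemma Uw : isU w. Proof. exact: (@isU_D w Dw Pw). Qed.

Lemma pe0 : pe != 0.
Proof.
have [m' em'] := em.
apply/eqP => e; have := pe_m; rewrite e em' expr0n /= => /esym /eqP; rewrite mulf_eq0 (negbTE w0) orbF.
by rewrite pnatr_eq0.
Qed.

Lemma two_eq : (2 : R) = pe ^+ m * w^-1.
Proof. by rewrite pe_m mulfK // w0. Qed.

Lemma pe_nonunit b : B b -> pe * b != 1.
Proof.
move=> [a [s [Da Ds Ps ->]]]; apply/eqP => e.
have s0 := @Pnz s Ps.
apply: Ps; rewrite -[s]mul1r -e mulrA divfK //.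
by apply: PMr; [apply: Ppe|].
Qed.

Lemma em2 : exists m', m = m'.+1.
Proof. exact: em. Qed.

Definition Mp b := exists c, B c /\ b = pe * c.

Lemma PinM y : P y -> Mp y.
Proof.
move=> Py; have /HD [s es] := PD Py; rewrite es in Py *.
have [t e] := evdec s.
have Ps0 : P (s`_0)%:~R.
  have -> : (s`_0)%:~R = ev s pe - pe * ev t pe :> R by rewrite e; ring.
  by apply: PB => //; apply: PMr; [apply: Ppe|apply: D_ev].
have /dvdzP [k ek] := proj1 (HZ _) Ps0.
have [m' e'] := em.
exists (k%:~R * pe ^+ m' * w^-1 + ev t pe); split.
  apply: BA; last by apply: BD; apply: D_ev.
  apply: BM; last by apply: Binv; [apply: Dw|apply: Pw].
  by apply: BM; [apply: BD; apply: Dz|apply: BX; apply: BD; apply: Dpe].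
rewrite e ek rmorphM /=.
have -> : ((2%:Z)%:~R : R) = 2 by [].
rewrite two_eq e' exprS; ring.
Qed.

Lemma nonM_unit b : B b -> ~ Mp b -> isU b.
Proof.
move=> [a [s [Da Ds Ps ->]]] nM.
case: (classic (P a)) => Pa.
  exfalso; apply: nM; have [c [Bc ->]] := PinM Pa.
  exists (c / s); split; last by rewrite mulrA.
  by apply: BM => //; apply: Binv.
have a0 := @Pnz a Pa; have s0 := @Pnz s Ps.
split.
- by exists a, s.
- by rewrite invf_div; exists s, a.
- by rewrite mulf_neq0 // invr_eq0.
Qed.

Lemma unit_notM u : isU u -> ~ Mp u.
Proof.
move=> [Bu Bu' u0] [c [Bc e]].
have /eqP := @pe_nonunit (c * u^-1) (BM Bc Bu'); apply.
by rewrite mulrA -e divff.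
Qed.

Lemma unit_add u c : isU u -> B c -> isU (u + pe * c).
Proof.
move=> Uu Bc; apply: nonM_unit.
  by apply: BA; [case: Uu|apply: BM => //; apply: BD; apply: Dpe].
move=> [c' [Bc' e]]; apply: (unit_notM Uu).
exists (c' - c); split; first by apply: BB.
by rewrite mulrBr -e; ring.
Qed.

Lemma Vlem j (r : {poly int}) : (forall i, (i < j)%N -> (2 %| r`_i)%Z) -> ~~ (2 %| r`_j)%Z -> (j < m)%N ->
  exists u, isU u /\ ev r pe = pe ^+ j * u.
Proof.
elim: j r => [|j IH] r hlow hj hjm.
  have [t e] := evdec r.
  exists (ev r pe); split; last by rewrite expr0 mul1r.
  rewrite e; apply: unit_add; last by apply: BD; apply: D_ev.
  apply: isU_D; first by apply: Dz.
  by move/HZ; apply/negP.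
have [t [ct er]] := L3 r.
have [u [Uu eu]] : exists u, isU u /\ ev t pe = pe ^+ j * u.
  apply: IH; last by apply: ltn_trans hjm.
  - by move=> i hi; rewrite ct; apply: hlow.
  - by rewrite ct.
have /dvdzP [k ek] := hlow 0%N isT.
have [l el] : exists l, m = (j + 2 + l)%N by exists (m - (j + 2))%N; lia.
exists (u + pe * (k%:~R * pe ^+ l * w^-1)); split.
  apply: unit_add => //.
  apply: BM; last by apply: Binv; [apply: Dw|apply: Pw].
  by apply: BM; [apply: BD; apply: Dz|apply: BX; apply: BD; apply: Dpe].
rewrite er evD evM evX evC eu ek rmorphM /=.
have -> : ((2%:Z)%:~R : R) = 2 by [].
rewrite two_eq el !exprD !exprS expr0; ring.
Qed.

Lemma Wlem (N i0 : nat) (r : {poly int}) : (absz (r`_i0)%R < N)%N -> r`_i0 != 0 -> (size r <= m)%N ->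
  exists k u, isU u /\ ev r pe = pe ^+ k * u.
Proof.
elim: N i0 r => // N IH i0 r hN hr0 hs.
case: (classic (exists i, ~~ (2 %| r`_i)%Z)) => [ex|nex].
  case: (ex_minnP ex) => j hj hmin.
  have hjm : (j < m)%N.
    rewrite ltnNge; apply/negP => hmj; move/negP: hj; apply.
    by rewrite nth_default ?dvdz0 //; apply: leq_trans hs hmj.
  have hlow : forall i, (i < j)%N -> (2 %| r`_i)%Z.
    by move=> i hi; apply/negPn/negP => h; have := hmin i h; rewrite leqNgt hi.
  have [u [Uu eu]] := @Vlem j r hlow hj hjm.
  by exists j, u.
have ev2 : forall i, (2 %| r`_i)%Z.
  by move=> i; apply/negPn/negP => h; apply: nex; exists i.
pose r' := \poly_(i < size r) (r`_i %/ 2)%Z.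
have er : r = r' *+ 2.
  apply/polyP => i; rewrite coefMn coef_poly; case: ifP => hi.
    have := divzK (ev2 i); move: (r`_i %/ 2)%Z (r`_i) => a b; rewrite mulr2n; lia.
  by rewrite mul0rn nth_default // leqNgt hi.
have hi0 : (i0 < size r)%N.
  by rewrite ltnNge; apply/negP => h; move/negP: hr0; apply; rewrite nth_default.
have c0 : r'`_i0 = (r`_i0 %/ 2)%Z by rewrite coef_poly hi0.
have [k [u [Uu eu]]] : exists k u, isU u /\ ev r' pe = pe ^+ k * u.
  apply: (IH i0).
  - rewrite c0; have := divzK (ev2 i0); move: hN hr0; move: (r`_i0 %/ 2)%Z (r`_i0) => a b; lia.
  - rewrite c0; have := divzK (ev2 i0); move: hr0; move: (r`_i0 %/ 2)%Z (r`_i0) => a b; lia.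
  - by apply: leq_trans (size_poly _ _) hs.
exists (m + k)%N, (u * w^-1); split; first by apply: isU_mul => //; apply: isU_inv; apply: Uw.
rewrite er evMn eu -mulr_natr two_eq exprD; ring.
Qed.

Lemma F13 a : D a -> a != 0 -> exists k u, isU u /\ a = pe ^+ k * u.
Proof.
move=> /HD [s ->] a0.
pose g := ('X^m + q *+ 2 : {poly int}).
have hq2 : (size (q *+ 2) < size ('X^m : {poly int}))%N.
  by rewrite size_polyXn; apply: leq_ltn_trans (size_Mn_le _ _) _.
have mg : g \is monic by apply/monicP; rewrite /g lead_coefDl ?lead_coefXn.
have sg : size g = m.+1 by rewrite /g size_polyDl // size_polyXn.
have g0 : g != 0 by rewrite -size_poly_eq0 sg.
have es := Pdiv.RingMonic.rdivp_eq mg s.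
set r := Pdiv.CommonRing.rmodp s g in es.
have evs : ev s pe = ev r pe by rewrite {1}es evD evM Heq mulr0 add0r.
have hsr : (size r <= m)%N by rewrite -ltnS -sg; apply: Pdiv.CommonRing.ltn_rmodpN0.
have r0 : r != 0 by apply/eqP => r0; move: a0; rewrite evs r0 /ev rmorph0 horner0 eqxx.
have hl : r`_(size r).-1 != 0 by rewrite -lead_coefE lead_coef_eq0.
have [k [u [Uu eu]]] := @Wlem (absz (lead_coef r)).+1 (size r).-1 r (ltnSn _) hl hsr.
by exists k, u; rewrite evs.
Qed.

Lemma F14 b : B b -> b != 0 -> exists k u, isU u /\ b = pe ^+ k * u.
Proof.
move=> [a [s [Da Ds Ps ->]]] b0.
have a0 : a != 0 by apply: contraNneq b0 => ->; rewrite mul0r.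
have [k [u [Uu ->]]] := F13 Da a0.
exists k, (u * s^-1); split; last by rewrite mulrA.
by apply: isU_mul => //; apply: isU_inv; apply: isU_D.
Qed.

Lemma min_ex (Q : nat -> Prop) k : Q k -> exists k0, Q k0 /\ forall k', Q k' -> (k0 <= k')%N.
Proof.
move=> Qk; case: (classic (exists k0, Q k0 /\ forall k', Q k' -> (k0 <= k')%N)) => // nmin.
have H : forall n k', (k' <= n)%N -> ~ Q k'.
  elim=> [|n IH] k' hk Qk'; apply: nmin; exists k'; split => // k'' Qk''.
    by move: hk; rewrite leqn0 => /eqP ->.
  case: (leqP k' k'') => // hlt; exfalso; apply: (IH k'') => //; lia.
by case: (H k k (leqnn k) Qk).
Qed.

Lemma toMp J : ideal_in B J -> ~ J 1 -> forall y, J y -> Mp y.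
Proof.
move=> [JB J0 JD JM] nJ1 y Jy.
case: (eqVneq y 0) => [->|y0]; first by exists 0; split; rewrite ?mulr0 //; apply: B0.
have [k [u [[Bu Bu' u0] ey]]] := F14 (JB _ Jy) y0.
case: k ey => [|k] ey.
  exfalso; apply: nJ1; have -> : (1 : R) = u^-1 * y by rewrite ey expr0 mul1r mulVf.
  exact: JM.
exists (pe ^+ k * u); split; last by rewrite ey exprS mulrA.
by apply: BM => //; apply: BX; apply: BD; apply: Dpe.
Qed.

Lemma Mp_ideal : ideal_in B Mp.
Proof.
split.
- by move=> y [c [Bc ->]]; apply: BM => //; apply: BD; apply: Dpe.
- by exists 0; split; rewrite ?mulr0 //; apply: B0.
- move=> a b [c [Bc ->]] [c' [Bc' ->]]; exists (c - c'); split; first exact: BB.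
  by rewrite mulrBr.
- move=> a b Ba [c [Bc ->]]; exists (a * c); split; first exact: BM.
  by rewrite mulrCA.
Qed.

Lemma Mp1 : ~ Mp 1.
Proof. by move=> [c [Bc e]]; move/eqP: (pe_nonunit Bc); apply; rewrite -e. Qed.

Theorem dvr_abs : dvr B.
Proof.
split.
  move=> I IB; have [IBs I0 IBB IM] := IB.
  case: (classic (exists y, I y /\ y != 0)) => [[y [Iy y0]]|nex].
    have [k [u [Uu ey]]] := F14 (IBs _ Iy) y0.
    have [k0 [[y1 [u1 [Iy1 Uu1 ey1]]] hmin]] :=
      @min_ex (fun k => exists y u, [/\ I y, isU u & y = pe ^+ k * u]) k
        (ex_intro _ y (ex_intro _ u (And3 Iy Uu ey))).
    exists (pe ^+ k0); split; first by apply: BX; apply: BD; apply: Dpe.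
    move=> z; split.
      move=> Iz; case: (eqVneq z 0) => [->|z0].
        by exists 0; split; rewrite ?mul0r //; apply: B0.
      have [k2 [u2 [Uu2 ez]]] := F14 (IBs _ Iz) z0.
      have hk : (k0 <= k2)%N by apply: hmin; exists z, u2.
      exists (pe ^+ (k2 - k0) * u2); split.
        by apply: BM; [apply: BX; apply: BD; apply: Dpe|case: Uu2].
      by rewrite ez -{1}(subnK hk) exprD; ring.
    move=> [b [Bb ->]].
    case: Uu1 => Bu1 Bu1' u10.
    have -> : pe ^+ k0 = u1^-1 * y1 by rewrite ey1 mulrCA mulVf // mulr1.
    by rewrite mulrA; apply: IM => //; apply: BM.
  exists 0; split; first by apply: B0.
  move=> z; split.
    move=> Iz; exists 0; split; first by apply: B0.
    rewrite mul0r; apply/eqP; apply/negPn/negP => z0; apply: nex; by exists z.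
  by move=> [b [_ ->]]; rewrite mulr0.
exists Mp; split.
- split; [exact: Mp_ideal|exact: Mp1|].
  by move=> J IJ _ nJ1; apply: toMp.
- by exists pe; split; [exists 1; split; rewrite ?mulr1 //; apply: B1|apply: pe0].
- move=> M' [IM' nM'1 maxM'] y; split; first by apply: toMp.
  apply: (maxM' Mp Mp_ideal) => //; last exact: Mp1.
  by apply: toMp.
Qed.

End Abs.

Unset Implicit Arguments.

Theorem lemma4p4 (R : realType) (nu n : nat) :
  (3 <= nu)%N -> squarefree nu -> (nu %% 4 = 2 \/ nu %% 4 = 3)%N ->
  (1 <= n)%N ->
  forall P : R -> Prop,
    maximal_ideal (Zadj (xseq R nu n)) P ->
    (forall z : int, P (z%:~R) <-> (2 %| z)%Z) ->
    dvr (localization (Zadj (xseq R nu n)) P).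
Proof.
move=> _ _ Hnu n1 P HP HZ.
have [q [sq oq eq]] := @eis_n R nu Hnu n n1.
set pe := pi R nu n in eq.
have HD : forall y, Zadj (xseq R nu n) y <-> exists s, y = ev s pe.
  move=> y; split.
    move=> [p ->]; exists (p \Po ('X + (cc nu n)%:P)).
    rewrite ev_comp evD evX evC /pe /pi /xx subrK //.
  move=> [s ->]; exists (s \Po ('X - (cc nu n)%:P)).
  by rewrite -/(ev _ _) ev_comp evB evX evC /pe /pi /xx.
have Hm : (1 <= 2 ^ n)%N by rewrite expn_gt0.
exact: (@dvr_abs R (Zadj (xseq R nu n)) P pe (2 ^ n) q HD HP HZ Hm sq oq eq).
Qed.
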